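(* For every instance, $$\mathrm{opt}\text{-}\mathrm{SUM}\le \mathrm{opt}_M\text{-}\mathrm{SUM}\le 2\,\mathrm{opt}\text{-}\mathrm{SUM}\qquad\text{and}\qquad \mathrm{opt}\text{-}\mathrm{MAX}\le \mathrm{opt}_M\text{-}\mathrm{MAX}\le 2\,\mathrm{opt}\text{-}\mathrm{MAX}.$$
   Context: An instance consists of a finite set $E$ of elements with nonnegative weights $(p_e)_{e\in E}$ (normalized $\sum_e p_e=1$ for SUM objectives and $\max_e p_e=1$ for MAX objectives), and $m$ tests; test $i\in[m]$ is a subset $s_i\subseteq E$. A schedule is an infinite test sequence $\sigma_1,\sigma_2,\dots\in[m]$; a stochastic schedule generates it randomly with the distribution of $\sigma_t$ possibly depending on $\sigma_1,\dots,\sigma_{t-1}$; a memoryless schedule draws each $\sigma_t$ independently from a fixed distribution $q$ on $[m]$. Detection time $T(e,t)=\mathbb{E}[1+\min\{h\ge0:e\in s_{\sigma_{t+h}}\}]$, $M_t[e]=\sup_tT(e,t)$, $E_t[e]=\lim_H\frac1H\sum_{t\le H}T(e,t)$. Valid: for every $e$, $M_t[e]<\infty$ and $E_t[e]$ exists, and for every $i$, $\lim_H\frac1H\sum_{t\le H}\Pr[\sigma_t=i]$ exists. $\mathrm{EEP}=\sum_ep_eE_t[e]$, $\mathrm{WEP}=\max_ep_eE_t[e]$. $\mathrm{opt}\text{-}\mathrm{SUM}$ and $\mathrm{opt}\text{-}\mathrm{MAX}$ are the infima of EEP and WEP over valid stochastic schedules; $\mathrm{opt}_M\text{-}\mathrm{SUM}$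 and $\mathrm{opt}_M\text{-}\mathrm{MAX}$ are the infima of EEP and WEP over valid memoryless schedules (equal to $\inf_q\sum_ep_e/Q_e$ and $\inf_q\max_ep_e/Q_e$, $Q_e=\sum_{i:e\in s_i}q_i$). *)

(* Defs.v *)
From HB Require Import structures.
From mathcomp Require Import all_boot all_order all_algebra.
From mathcomp Require Import all_classical all_reals all_analysis.
Set Implicit Arguments. Unset Strict Implicit. Unset Printing Implicit Defensive.
Import Order.TTheory GRing.Theory Num.Theory.
Import numFieldNormedType.Exports.
Local Open Scope classical_set_scope.
Local Open Scope ring_scope.

(* An instance: a finite type E of elements, m tests s : 'I_m -> {set E},
   weights p : E -> R.  Time is 0-based: the schedule is sigma_0, sigma_1, ... *)

(* A stochastic schedule is given by its conditional distributions:
   K h is the distribution of the next test given the history h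
   (the list of previously chosen tests, oldest first). *)
Definition is_sched (R : realType) (m : nat) (K : seq 'I_m -> 'I_m -> R) : Prop :=
  forall h : seq 'I_m, (forall i, 0 <= K h i) /\ \sum_(i < m) K h i = 1.

Definition is_memoryless (R : realType) (m : nat) (K : seq 'I_m -> 'I_m -> R) : Prop :=
  exists q : 'I_m -> R, forall h, K h = q.

Fixpoint wprob_from (R : realType) (m : nat) (K : seq 'I_m -> 'I_m -> R)
    (h w : seq 'I_m) : R :=
  match w with
  | [::] => 1
  | x :: w' => K h x * wprob_from K (rcons h x) w'
  end.

Definition wprob (R : realType) (m : nat) (K : seq 'I_m -> 'I_m -> R)
  (w : seq 'I_m) : R := wprob_from K [::] w.

(* E[1 + min(H, N)] where H = min{h >= 0 : e \in s_{sigma_{t+h}}}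
   (H = +oo if no such h); computed on the law of (sigma_0, ..., sigma_{t+N-1}). *)
Definition trunc_det (R : realType) (m : nat) (E : finType) (s : 'I_m -> {set E})
    (K : seq 'I_m -> 'I_m -> R) (e : E) (t N : nat) : R :=
  \sum_(w : (t + N).-tuple 'I_m)
     wprob K w * (1 + find (fun i => e \in s i) (drop t w))%:R.

(* Detection time T(e,t) = E[1 + H] (in [1, +oo]), by monotone convergence the
   supremum over N of the truncated expectations. *)
Definition detT (R : realType) (m : nat) (E : finType) (s : 'I_m -> {set E})
    (K : seq 'I_m -> 'I_m -> R) (e : E) (t : nat) : \bar R :=
  ereal_sup [set (trunc_det s K e t N)%:E | N in [set: nat]].

Definition detM (R : realType) (m : nat) (E : finType) (s : 'I_m -> {set E})
    (K : seq 'I_m -> 'I_m -> R) (e : E) : \bar R :=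
  ereal_sup [set detT s K e t | t in [set: nat]].

(* Cesaro averages (1/H) sum_{t < H} T(e,t) (used when T is finite) *)
Definition avgT (R : realType) (m : nat) (E : finType) (s : 'I_m -> {set E})
    (K : seq 'I_m -> 'I_m -> R) (e : E) (H : nat) : R :=
  H%:R^-1 * \sum_(t < H) fine (detT s K e t).

Definition prob_at (R : realType) (m : nat) (K : seq 'I_m -> 'I_m -> R)
    (t : nat) (i : 'I_m) : R :=
  \sum_(w : t.+1.-tuple 'I_m) wprob K w * ((tnth w ord_max == i)%:R).

Definition avg_prob (R : realType) (m : nat) (K : seq 'I_m -> 'I_m -> R)
    (i : 'I_m) (H : nat) : R :=
  H%:R^-1 * \sum_(t < H) prob_at K t i.

Definition detE (R : realType) (m : nat) (E : finType) (s : 'I_m -> {set E})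
    (K : seq 'I_m -> 'I_m -> R) (e : E) : R :=
  limn (avgT s K e).

Definition valid (R : realType) (m : nat) (E : finType) (s : 'I_m -> {set E})
    (K : seq 'I_m -> 'I_m -> R) : Prop :=
  is_sched K /\
  (forall e : E, (detM s K e < +oo)%E /\ cvgn (avgT s K e)) /\
  (forall i : 'I_m, cvgn (avg_prob K i)).

Definition EEP (R : realType) (m : nat) (E : finType) (s : 'I_m -> {set E})
    (p : E -> R) (K : seq 'I_m -> 'I_m -> R) : R :=
  \sum_(e : E) p e * detE s K e.

Definition WEP (R : realType) (m : nat) (E : finType) (s : 'I_m -> {set E})
    (p : E -> R) (K : seq 'I_m -> 'I_m -> R) : R :=
  \big[Num.max/0]_(e : E) (p e * detE s K e).

(* infima over valid stochastic / valid memoryless schedules, in \bar R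
   (+oo if no valid schedule exists) *)
Definition opt_SUM (R : realType) (m : nat) (E : finType) (s : 'I_m -> {set E})
    (p : E -> R) : \bar R :=
  ereal_inf [set (EEP s p K)%:E | K in [set K | valid s K]].

Definition opt_MAX (R : realType) (m : nat) (E : finType) (s : 'I_m -> {set E})
    (p : E -> R) : \bar R :=
  ereal_inf [set (WEP s p K)%:E | K in [set K | valid s K]].

Definition optM_SUM (R : realType) (m : nat) (E : finType) (s : 'I_m -> {set E})
    (p : E -> R) : \bar R :=
  ereal_inf [set (EEP s p K)%:E | K in [set K | valid s K /\ is_memoryless K]].

Definition optM_MAX (R : realType) (m : nat) (E : finType) (s : 'I_m -> {set E})
    (p : E -> R) : \bar R :=
  ereal_inf [set (WEP s p K)%:E | K in [set K | valid s K /\ is_memoryless K]].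

(* Main.v *)
Require Import Defs.
From HB Require Import structures.
From mathcomp Require Import all_boot all_order all_algebra.
From mathcomp Require Import all_classical all_reals all_analysis.
From mathcomp Require Import ring lra.
Import Order.TTheory GRing.Theory Num.Theory.
Set Implicit Arguments. Unset Strict Implicit. Unset Printing Implicit Defensive.
Import numFieldNormedType.Exports.
Local Open Scope classical_set_scope.
Local Open Scope ring_scope.

Section Tup.
Variables (R : realType) (m : nat).
Local Notation T := 'I_m.

Lemma sum_tuple_cons n (F : seq T -> R) :
  \sum_(w : n.+1.-tuple T) F w = \sum_(x : T) \sum_(w : n.-tuple T) F (x :: w).
Proof.
rewrite pair_big /=.
rewrite (reindex (fun p : T * n.-tuple T => [tuple of p.1 :: p.2])) /=; last first.
  exists (fun t : n.+1.-tuple T => (thead t, [tuple of behead t])).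
    by move=> [x w] _ /=; congr pair; apply: val_inj.
  by move=> t _; apply: val_inj => /=; rewrite [in RHS](tuple_eta t).
by [].
Qed.

Lemma sum_tuple0 (F : seq T -> R) : \sum_(w : 0.-tuple T) F w = F [::].
Proof.
rewrite (big_pred1 [tuple]) // => w /=.
by rewrite [w]tuple0; apply/eqP.
Qed.


Lemma wprob_ge0 (K : seq T -> T -> R) : is_sched K ->
  forall w h, 0 <= wprob_from K h w.
Proof.
move=> hK; elim=> [|x w IH] h /=; first exact: ler01.
by rewrite mulr_ge0 //; case: (hK h).
Qed.

Lemma mass (K : seq T -> T -> R) : is_sched K ->
  forall k h, \sum_(w : k.-tuple T) wprob_from K h w = 1.
Proof.
move=> hK; elim=> [|k IH] h; first by rewrite (sum_tuple0 (fun w => wprob_from K h w)).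
rewrite (sum_tuple_cons _ (fun w => wprob_from K h w)) /=.
under eq_bigr => x _ do rewrite -mulr_sumr IH mulr1.
by case: (hK h).
Qed.

Lemma ext (K : seq T -> T -> R) : is_sched K ->
  forall n k h (G : seq T -> R),
  \sum_(w : (n + k).-tuple T) wprob_from K h w * G (take n w) =
  \sum_(w : n.-tuple T) wprob_from K h w * G w.
Proof.
move=> hK; elim=> [|n IH] k h G.
  rewrite add0n.
  under eq_bigr => w _ do rewrite take0.
  rewrite -mulr_suml mass // mul1r.
  by rewrite (sum_tuple0 (fun w => wprob_from K h w * G w)) /= mul1r.
rewrite addSn (sum_tuple_cons _ (fun w => wprob_from K h w * G (take n.+1 w))).
rewrite (sum_tuple_cons _ (fun w => wprob_from K h w * G w)) /=; apply: eq_bigr => x _.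
under eq_bigr => w _ do rewrite -mulrA.
rewrite -mulr_sumr (IH k (rcons h x) (fun w => G (x :: w))).
by rewrite mulr_sumr; apply: eq_bigr => w _; rewrite mulrA.
Qed.


Lemma pointwise (P : pred T) (x0 : T) (c : R) : 0 <= c -> forall w : seq T,
  c * (size w)%:R - c^+2/2 * (\sum_(t < size w) (P (nth x0 w t))%:R + 1) - 1
    + (((find P w).+1%:R - c)^+2/2 + (find P w).+1%:R/2)
  <= \sum_(t < size w) (1 + find P (drop t w))%:R.
Proof.
move=> c0; elim=> [|x w IH].
  rewrite /= !big_ord0 /=; lra.
rewrite /= !big_ord_recl /=.
set S := \sum_(i < size w) _ in IH *.
set C := \sum_(i < size w) _ in IH *.
rewrite -/S -/C.
move: IH; set d := (find P w).+1%:R; set n := (size w)%:R.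
have d0 : 0 <= d by rewrite /d ler0n.
have hn : (size w).+1%:R = n + 1 :> R by rewrite /n -addn1 natrD.
rewrite hn.
case: (P x) => /= IH.
  rewrite addn0.
  have hf : 0 <= (d - c)^+2 by apply: sqr_ge0.
  have e1 : (1 - c)^+2 = 1 - 2 * c + c^+2 by ring.
  rewrite e1; lra.
have h2 : (find P w).+2%:R = d + 1 :> R by rewrite /d -[(find P w).+2]addn1 natrD.
rewrite -[(1 + (find P w).+1)%N]/((find P w).+2) h2.
have e1 : (d + 1 - c)^+2 = (d - c)^+2 + 2 * (d - c) + 1 by ring.
rewrite e1; lra.
Qed.




Lemma ext_le (K : seq T -> T -> R) : is_sched K ->
  forall n L (G : seq T -> R), (n <= L)%N ->
  \sum_(w : L.-tuple T) wprob K w * G (take n w) =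
  \sum_(w : n.-tuple T) wprob K w * G w.
Proof.
move=> hK n L G hnL; rewrite -(subnKC hnL); exact: ext.
Qed.

Variables (E : finType) (s : 'I_m -> {set E}).

Lemma trunc_H (K : seq T -> T -> R) : is_sched K ->
  forall e t H, (t <= H)%N ->
  trunc_det s K e t (H - t) =
  \sum_(w : H.-tuple T) wprob K w * (1 + find (fun i => e \in s i) (drop t w))%:R.
Proof.
move=> hK e t H htH; rewrite /trunc_det.
rewrite -(ext_le hK (fun w => (1 + find (fun i => e \in s i) (drop t w))%:R) (n:=t + (H - t)) (L:=H)); last by rewrite subnKC.
apply: eq_bigr => w _; by rewrite subnKC // take_oversize // size_tuple.
Qed.

Lemma prob_H (K : seq T -> T -> R) : is_sched K ->
  forall t H i, (t < H)%N ->
  prob_at K t i = \sum_(w : H.-tuple T) wprob K w * (nth i w t == i)%:R.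
Proof.
move=> hK t H i htH; rewrite /prob_at.
under eq_bigr => w _ do rewrite (tnth_nth i) /=.
rewrite -(ext_le hK (fun w => (nth i w t == i)%:R) (n:=t.+1) (L:=H)) //.
by apply: eq_bigr => w _; rewrite nth_take.
Qed.


Lemma fine_ge (x : R) (y : \bar R) : (x%:E <= y)%E -> (y < +oo)%E -> x <= fine y.
Proof. by case: y => [r| |] //=; rewrite lee_fin. Qed.

Lemma indic_sum (e : E) (H : nat) (w : H.-tuple T) (i0 : T) (t : nat) : (t < H)%N ->
  ((e \in s (nth i0 w t))%:R : R) = \sum_i (e \in s i)%:R * (nth i w t == i)%:R.
Proof.
move=> ht; rewrite (bigD1 (nth i0 w t)) //=.
rewrite [nth (nth i0 w t) w t](set_nth_default i0) ?size_tuple // eqxx mulr1 big1 ?addr0 // => j hj.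
rewrite (set_nth_default i0) ?size_tuple // (eq_sym _ j) (negbTE hj).
by rewrite mulr0.
Qed.

Lemma count_exp (K : seq T -> T -> R) : is_sched K ->
  forall (e : E) (H : nat) (i0 : T), (0 < H)%N ->
  \sum_(w : H.-tuple T) wprob K w * (\sum_(t < H) (e \in s (nth i0 w t))%:R) =
  H%:R * \sum_i (e \in s i)%:R * avg_prob K i H.
Proof.
move=> hK e H i0 H0.
under eq_bigr => w _ do rewrite mulr_sumr.
rewrite exchange_big /=.
have E1 : forall t : 'I_H, \sum_(w : H.-tuple T) wprob K w * (e \in s (nth i0 w t))%:R
   = \sum_i (e \in s i)%:R * prob_at K t i.
  move=> t.
  under eq_bigr => w _ do rewrite (indic_sum e w i0 (ltn_ord t)) mulr_sumr.
  rewrite exchange_big /=; apply: eq_bigr => i _.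
  rewrite (prob_H hK i (ltn_ord t)) mulr_sumr; apply: eq_bigr => w _; ring.
rewrite (eq_bigr _ (fun t _ => E1 t)).
rewrite exchange_big /= mulr_sumr; apply: eq_bigr => i _.
rewrite -mulr_sumr /avg_prob mulrCA mulVKf //.
by rewrite pnatr_eq0 -lt0n.
Qed.


Lemma lower (K : seq T -> T -> R) : valid s K ->
  forall (e : E) (i0 : T) (c : R) (H : nat), 0 <= c -> (0 < H)%N ->
  c - c^+2/2 * (\sum_i (e \in s i)%:R * avg_prob K i H) - (c^+2/2 + 1) / H%:R
  <= avgT s K e H.
Proof.
case=> hS [hE hP] e i0 c H c0 H0.
set Q := \sum_i _.
have hfin : forall t : 'I_H, trunc_det s K e t (H - t) <= fine (detT s K e t).
  move=> t; apply: fine_ge.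
    by apply: ereal_sup_ubound; exists (H - t)%N.
  apply: le_lt_trans (proj1 (hE e)); apply: ereal_sup_ubound; by exists t.
have key : c * H%:R - c^+2/2 * (H%:R * Q + 1) - 1 <= \sum_(t < H) fine (detT s K e t).
  apply: le_trans (ler_sum _ (fun t _ => hfin t)).
  rewrite (eq_bigr _ (fun t _ => trunc_H hS e (ltnW (ltn_ord t)))).
  rewrite exchange_big /=.
  under eq_bigr => w _ do rewrite -mulr_sumr.
  have hcnt := count_exp hS e i0 H0.
  have hm := mass hS H [::].
  apply: le_trans (_ : \sum_(w : H.-tuple T) wprob K w *
     (c * H%:R - c^+2/2 * (\sum_(t < H) (e \in s (nth i0 w t))%:R + 1) - 1) <= _).
    rewrite (eq_bigr (fun w : H.-tuple T => (c * H%:R - c^+2/2 - 1) * wprob K w -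
        c^+2/2 * (wprob K w * \sum_(t < H) (e \in s (nth i0 w t))%:R))); last first.
      by move=> w _; ring.
    rewrite sumrB -mulr_sumr -mulr_sumr hcnt.
    rewrite /wprob in hm *; rewrite hm -/Q; lra.
  apply: ler_sum => w _; apply: ler_wpM2l; first exact: wprob_ge0.
  have := pointwise (fun i => e \in s i) i0 c0 w.
  rewrite size_tuple.
  set f := (_ + _ / 2).
  have f0 : 0 <= f by rewrite /f addr_ge0 ?divr_ge0 ?sqr_ge0 ?ler0n.
  lra.
rewrite /avgT.
have Hp : 0 < H%:R :> R by rewrite ltr0n.
apply: le_trans (_ : H%:R^-1 * (c * H%:R - c^+2/2 * (H%:R * Q + 1) - 1) <= _); last first.
  by rewrite ler_wpM2l // invr_ge0 ltW.
have Hn : H%:R != 0 :> R by rewrite gt_eqF.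
rewrite le_eqVlt; apply/orP; left; apply/eqP.
by field.
Qed.


Lemma inv_harm (H : nat) : (0 < H)%N -> H%:R^-1 <= 2 * harmonic H :> R.
Proof.
move=> H0; rewrite /harmonic /=.
have x1 : 1 <= H%:R :> R by rewrite ler1n.
have -> : H.+1%:R = H%:R + 1 :> R by rewrite -addn1 natrD.
have hx : H%:R + 1 != 0 :> R by rewrite gt_eqF //; lra.
rewrite (_ : 2 * (H%:R + 1)^-1 = ((H%:R + 1) / 2)^-1); last by field.
rewrite lef_pV2 ?posrE; lra.
Qed.

Lemma cvg_fsum (u : T -> nat -> R) (a : T -> R) :
  (forall i, u i n @[n --> \oo] --> a i) ->
  \sum_i u i n @[n --> \oo] --> \sum_i a i.
Proof.
move=> hu.
apply: (@cvg_big _ _ +%R 0 xpredT); last by move=> i _; exact: hu.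
exact: add_continuous.
Qed.


Lemma detE_lower (K : seq T -> T -> R) : valid s K ->
  forall (e : E) (i0 : T) (c : R), 0 <= c ->
  c - c^+2/2 * (\sum_i (e \in s i)%:R * limn (avg_prob K i)) <= detE s K e.
Proof.
move=> hV e i0 c c0; have hV' := hV; case: hV' => hS [hE hP].
set k := 2 * (c^+2/2 + 1).
pose g := fun H : nat => c - c^+2/2 * (\sum_i (e \in s i)%:R * avg_prob K i H) - k * harmonic H.
have cQ : (fun H => \sum_i (e \in s i)%:R * avg_prob K i H) @ \oo -->
          \sum_i (e \in s i)%:R * limn (avg_prob K i).
  apply: cvg_fsum => i; apply: cvgMl_tmp; exact: (hP i).
have cg : g @ \oo --> c - c^+2/2 * (\sum_i (e \in s i)%:R * limn (avg_prob K i)) - k * 0.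
  apply: cvgB; last by apply: cvgMl_tmp; exact: cvg_harmonic.
  apply: cvgB; first exact: cvg_cst.
  by apply: cvgMl_tmp; exact: cQ.
rewrite mulr0 subr0 in cg.
rewrite -(cvg_lim _ cg) ?/detE //.
apply: ler_lim.
- exact: cvgP cg.
- exact: (proj2 (hE e)).
near=> H.
have H0 : (0 < H)%N by near: H; exact: nbhs_infty_gt.
apply: le_trans (lower hV e i0 c0 H0).
rewrite /g lerB //.
have := inv_harm H0.
have hk : 0 <= c^+2/2 + 1 by rewrite addr_ge0 ?divr_ge0 ?sqr_ge0.
rewrite /k -mulrA => hh.
rewrite mulrCA; exact: ler_wpM2l.
Unshelve. all: by end_near.
Qed.


Lemma sum_eq1 (x : T) : \sum_i ((x == i)%:R : R) = 1.
Proof.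
rewrite (bigD1 x) //= eqxx big1 ?addr0 // => j hj.
by rewrite eq_sym (negbTE hj).
Qed.

Lemma sum_eq1q (q : T -> R) (x : T) : \sum_i q i * (x == i)%:R = q x.
Proof.
rewrite (bigD1 x) //= eqxx mulr1 big1 ?addr0 // => j hj.
by rewrite eq_sym (negbTE hj) mulr0.
Qed.

Section Memo.
Variables (q : T -> R) (q0 : forall i, 0 <= q i) (q1 : \sum_i q i = 1).

Definition Kq : seq T -> T -> R := fun _ => q.

Lemma Kq_sched : is_sched Kq.
Proof. by move=> h; split. Qed.

Lemma wprob_memo h w : wprob_from Kq h w = \prod_(x <- w) q x.
Proof. by elim: w h => [|x w IH] h /=; rewrite ?big_nil ?big_cons ?IH. Qed.

Lemma mass_q N : \sum_(w : N.-tuple T) \prod_(x <- w) q x = 1.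
Proof.
rewrite -[RHS](mass Kq_sched N [::]); apply: eq_bigr => w _; by rewrite wprob_memo.
Qed.

Lemma drop_q t N (G : seq T -> R) :
  \sum_(w : (t + N).-tuple T) \prod_(x <- w) q x * G (drop t w) =
  \sum_(w : N.-tuple T) \prod_(x <- w) q x * G w.
Proof.
elim: t G => [|t IH] G.
  by rewrite add0n; apply: eq_bigr => w _; rewrite drop0.
rewrite addSn (sum_tuple_cons _ (fun w => \prod_(x <- w) q x * G (drop t.+1 w))) /=.
rewrite (eq_bigr (fun x => q x * \sum_(w : (t + N).-tuple T) \prod_(y <- w) q y * G (drop t w))); last first.
  move=> x _; rewrite mulr_sumr; apply: eq_bigr => w _; by rewrite big_cons mulrA.
under eq_bigr => x _ do rewrite IH.
by rewrite -mulr_suml q1 mul1r.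
Qed.

Lemma prob_q t i : prob_at Kq t i = q i.
Proof.
rewrite /prob_at /wprob.
under eq_bigr => w _ do rewrite (tnth_nth i) /= wprob_memo -[t in nth i _ t]addn0 -nth_drop.
rewrite -[t.+1]addn1 (drop_q t 1 (fun w => (nth i w 0 == i)%:R)).
rewrite (sum_tuple_cons _ (fun w => \prod_(x <- w) q x * (nth i w 0 == i)%:R)) /=.
under eq_bigr => x _ do rewrite (sum_tuple0 (fun w => \prod_(y <- x :: w) q y * (nth i (x :: w) 0 == i)%:R)) /= big_cons big_nil mulr1.
by rewrite -[RHS](sum_eq1q q i); apply: eq_bigr => x _; rewrite eq_sym.
Qed.

Lemma trunc_q e t N : trunc_det s Kq e t N =
  \sum_(w : N.-tuple T) \prod_(x <- w) q x * (1 + find (fun i => e \in s i) w)%:R.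
Proof.
rewrite /trunc_det /wprob.
under eq_bigr => w _ do rewrite wprob_memo.
exact: (drop_q t N (fun w => (1 + find (fun i => e \in s i) w)%:R)).
Qed.

Lemma Qle1 e : \sum_i (e \in s i)%:R * q i <= 1.
Proof.
rewrite -[X in _ <= X]q1; apply: ler_sum => i _.
by case: (e \in s i); rewrite ?mul1r ?mul0r.
Qed.

Lemma fq_le e : 0 < \sum_i (e \in s i)%:R * q i -> forall N,
  \sum_(w : N.-tuple T) \prod_(x <- w) q x * (1 + find (fun i => e \in s i) w)%:R
  <= (\sum_i (e \in s i)%:R * q i)^-1.
Proof.
set Q := \sum_i _ => Q0.
have Q1 : Q <= 1 by apply: Qle1.
elim=> [|N IH].
  rewrite (sum_tuple0 (fun w => \prod_(x <- w) q x * (1 + find (fun i => e \in s i) w)%:R)).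
  by rewrite /= big_nil mul1r invf_ge1.
set f := \sum_(w : N.-tuple T) _ in IH.
rewrite (sum_tuple_cons _ (fun w => \prod_(x <- w) q x * (1 + find (fun i => e \in s i) w)%:R)).
rewrite (eq_bigr (fun x => q x + f * (q x * (~~ (e \in s x))%:R))); last first.
  move=> x _ /=.
  case hx: (e \in s x) => /=.
    rewrite mulr0 mulr0 addr0.
    rewrite (eq_bigr (fun w : N.-tuple T => q x * \prod_(y <- w) q y)); last first.
      by move=> w _; rewrite big_cons addn0 mulr1.
    by rewrite -mulr_sumr mass_q mulr1.
  rewrite mulr1 (eq_bigr (fun w : N.-tuple T => q x * (\prod_(y <- w) q y) +
     q x * (\prod_(y <- w) q y * (1 + find (fun i => e \in s i) w)%:R))); last first.
    move=> w _; rewrite big_cons -[(find _ w).+1]add1n natrD; ring.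
  by rewrite big_split /= -!mulr_sumr mass_q /f; ring.
rewrite big_split /= q1 -mulr_sumr.
have -> : \sum_i q i * (~~ (e \in s i))%:R = 1 - Q.
  rewrite -[X in X - _]q1 /Q -sumrB; apply: eq_bigr => i _.
  by case: (e \in s i); rewrite /= ?mulr0 ?mulr1 ?mul1r ?mul0r ?subrr ?subr0.
have hQ : Q != 0 by rewrite gt_eqF.
apply: le_trans (_ : 1 + Q^-1 * (1 - Q) <= _).
  by rewrite lerD2l ler_wpM2r // subr_ge0.
by rewrite le_eqVlt; apply/orP; left; apply/eqP; field.
Qed.

End Memo.


Lemma prob_ge0 (K : seq T -> T -> R) : is_sched K -> forall t i, 0 <= prob_at K t i.
Proof.
move=> hK t i; apply: sumr_ge0 => w _; apply: mulr_ge0; first exact: wprob_ge0.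
exact: ler0n.
Qed.

Lemma avg_ge0 (K : seq T -> T -> R) : is_sched K -> forall i H, 0 <= avg_prob K i H.
Proof.
move=> hK i H; apply: mulr_ge0; first by rewrite invr_ge0 ler0n.
by apply: sumr_ge0 => t _; exact: prob_ge0.
Qed.

Lemma prob_sum1 (K : seq T -> T -> R) : is_sched K -> forall t, \sum_i prob_at K t i = 1.
Proof.
move=> hK t; rewrite /prob_at exchange_big /=.
under eq_bigr => w _ do rewrite -mulr_sumr sum_eq1 mulr1.
exact: mass.
Qed.

Lemma avg_sum1 (K : seq T -> T -> R) : is_sched K -> forall H, (0 < H)%N ->
  \sum_i avg_prob K i H = 1.
Proof.
move=> hK H H0; rewrite /avg_prob -mulr_sumr exchange_big /=.
under eq_bigr => t _ do rewrite prob_sum1 //.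
by rewrite sumr_const card_ord mulVf // pnatr_eq0 -lt0n.
Qed.

Lemma q_props (K : seq T -> T -> R) : valid s K ->
  (forall i, 0 <= limn (avg_prob K i)) /\ \sum_i limn (avg_prob K i) = 1.
Proof.
case=> hS [hE hP]; split.
  move=> i; apply: limr_ge; first exact: hP.
  by near=> H; apply: avg_ge0.
have c1 : (fun H => \sum_i avg_prob K i H) @ \oo --> \sum_i limn (avg_prob K i).
  by apply: cvg_fsum => i; exact: hP.
have c2 : (fun H => \sum_i avg_prob K i H) @ \oo --> (1 : R).
  apply: cvg_near_cst; near=> H; apply: avg_sum1 => //.
  by near: H; exact: nbhs_infty_gt.
by rewrite -(cvg_lim _ c1) ?(cvg_lim _ c2).
Unshelve. all: by end_near.
Qed.

Lemma key_bound (K : seq T -> T -> R) : valid s K -> forall e,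
  0 < \sum_i (e \in s i)%:R * limn (avg_prob K i) /\
  (\sum_i (e \in s i)%:R * limn (avg_prob K i))^-1 <= 2 * detE s K e.
Proof.
move=> hV e; have hV' := hV; case: hV' => hS _.
case: (pickP (fun _ : T => true)) => [i0 _ | h0]; last first.
  case: (hS [::]) => _; rewrite big_pred0 // => /eqP; by rewrite eq_sym oner_eq0.
have [q0 _] := q_props hV.
set Q := \sum_i _.
have Q0 : 0 <= Q.
  by apply: sumr_ge0 => i _; apply: mulr_ge0; [exact: ler0n | exact: q0].
have QP : 0 < Q.
  rewrite lt_def Q0 andbT; apply/eqP => Qe.
  have c0 : 0 <= `|detE s K e| + 1 by rewrite addr_ge0 ?normr_ge0.
  have := detE_lower hV e i0 c0; rewrite -/Q Qe mulr0 subr0.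
  have := ler_norm (detE s K e); lra.
split => //.
have c0 : 0 <= Q^-1 by rewrite invr_ge0.
have := detE_lower hV e i0 c0; rewrite -/Q.
have -> : Q^-1 - Q^-1 ^+ 2 / 2 * Q = (2 * Q)^-1 by field; rewrite gt_eqF.
move=> h; have : Q^-1 = 2 * (2 * Q)^-1 by field; rewrite gt_eqF.
move=> ->; rewrite ler_wpM2l //.
Qed.


Lemma memo_valid (q : T -> R) : (forall i, 0 <= q i) -> \sum_i q i = 1 ->
  (forall e, 0 < \sum_i (e \in s i)%:R * q i) ->
  valid s (Kq q) /\ is_memoryless (Kq q) /\
  forall e, detE s (Kq q) e <= (\sum_i (e \in s i)%:R * q i)^-1.
Proof.
move=> q0 q1 QP.
have hD : forall e, exists r : R, (forall t, detT s (Kq q) e t = r%:E) /\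
     r <= (\sum_i (e \in s i)%:R * q i)^-1.
  move=> e.
  set D := ereal_sup [set (\sum_(w : N.-tuple T) \prod_(x <- w) q x *
              (1 + find (fun i => e \in s i) w)%:R)%:E | N in [set: nat]].
  have ht : forall t, detT s (Kq q) e t = D.
    move=> t; rewrite /detT /D; congr ereal_sup; congr image.
    by apply: funext => N; rewrite trunc_q.
  have Dub : (D <= ((\sum_i (e \in s i)%:R * q i)^-1)%:E)%E.
    apply: ub_ereal_sup => _ [N _ <-]; rewrite lee_fin; exact: fq_le.
  have Dlb : ((\sum_(w : 0.-tuple T) \prod_(x <- w) q x *
              (1 + find (fun i => e \in s i) w)%:R)%:E <= D)%E.
    by apply: ereal_sup_ubound; exists 0%N.
  move: Dub Dlb; case: D ht => [r| |] ht //= Dub Dlb.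
  by exists r; split => //; rewrite -lee_fin.
split; last split.
- split; first exact: Kq_sched.
  split.
    move=> e; have [r [hr _]] := hD e; split.
      rewrite /Defs.detM; apply: (@le_lt_trans _ _ r%:E); last exact: ltry.
      by apply: ub_ereal_sup => _ [t _ <-]; rewrite hr.
    apply: (@is_cvg_near_cst _ _ r); near=> H.
    have H0 : (0 < H)%N by near: H; exact: nbhs_infty_gt.
    rewrite /avgT; under eq_bigr => t _ do rewrite hr /=.
    have Hn : H%:R != 0 :> R by rewrite pnatr_eq0 -lt0n.
    by rewrite sumr_const card_ord -mulr_natr; field.
  move=> i; apply: (@is_cvg_near_cst _ _ (q i)); near=> H.
  have H0 : (0 < H)%N by near: H; exact: nbhs_infty_gt.
  rewrite /avg_prob; under eq_bigr => t _ do rewrite prob_q //.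
  have Hn : H%:R != 0 :> R by rewrite pnatr_eq0 -lt0n.
  by rewrite sumr_const card_ord -mulr_natr; field.
- by exists q.
- move=> e; have [r [hr hle]] := hD e.
  rewrite /detE (_ : avgT s (Kq q) e = fun H => H%:R^-1 * (r *+ H)); last first.
    by apply: funext => H; rewrite /avgT; under eq_bigr => t _ do rewrite hr /=; rewrite sumr_const card_ord.
  have -> : limn (fun H => H%:R^-1 * (r *+ H)) = r.
    apply: cvg_lim => //; apply: cvg_near_cst; near=> H.
    have H0 : (0 < H)%N by near: H; exact: nbhs_infty_gt.
    have Hn : H%:R != 0 :> R by rewrite pnatr_eq0 -lt0n.
    by rewrite -mulr_natr; field.
  exact: hle.
Unshelve. all: by end_near.
Qed.


Lemma inf2 (A B : set (\bar R)) :
  (forall x, A x -> exists r : R, x = r%:E) ->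
  (forall x, A x -> (ereal_inf B <= 2%:E * x)%E) ->
  (ereal_inf B <= 2%:E * ereal_inf A)%E.
Proof.
move=> hA h.
have two : (2%:E * +oo = +oo :> \bar R)%E by rewrite mulr_infty gtr0_sg // mul1e.
case: (pselect (exists x, A x)) => [[x Ax]|nA]; last first.
  have -> : ereal_inf A = +oo%E.
    by apply/ereal_inf_pinfty => y Ay; exfalso; apply: nA; exists y.
  by rewrite two leey.
case hb: (ereal_inf B) => [r| |]; last by rewrite leNye.
  have lb : ((r/2)%:E <= ereal_inf A)%E.
    apply: le_ereal_inf_tmp => y Ay; have [z ez] := hA y Ay; have := h y Ay.
    by rewrite hb ez -EFinM !lee_fin; lra.
  case: (ereal_inf A) lb => [a| |] lb.
  - by rewrite -EFinM lee_fin; rewrite lee_fin in lb; lra.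
  - by rewrite two leey.
  - by [].
have := h x Ax; rewrite hb; have [r ->] := hA x Ax.
by rewrite -EFinM leye_eq.
Qed.


Lemma improve (p : E -> R) : (forall e, 0 <= p e) ->
  forall K, valid s K -> exists K', (valid s K' /\ is_memoryless K') /\
  EEP s p K' <= 2 * EEP s p K /\ WEP s p K' <= 2 * WEP s p K.
Proof.
move=> p0 K hV.
have [q0 q1] := q_props hV.
have hk := key_bound hV.
have [hV' [hM hd]] := memo_valid q0 q1 (fun e => proj1 (hk e)).
exists (Kq (fun i => limn (avg_prob K i))); split => //.
have hb : forall e, p e * detE s (Kq (fun i => limn (avg_prob K i))) e <= 2 * (p e * detE s K e).
  move=> e; rewrite mulrCA; apply: ler_wpM2l => //.
  exact: le_trans (hd e) (proj2 (hk e)).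
have hE0 : forall e, 0 <= p e * detE s K e.
  move=> e; apply: mulr_ge0 => //.
  have h1 := proj2 (hk e); have h2 := proj1 (hk e).
  have : 0 <= (\sum_i (e \in s i)%:R * limn (avg_prob K i))^-1 by rewrite invr_ge0 ltW.
  lra.
split.
  rewrite /EEP mulr_sumr; apply: ler_sum => e _; exact: hb.
have W0 : 0 <= WEP s p K.
  rewrite /WEP; apply: (big_ind (fun x => 0 <= x)) => //.
  by move=> x y hx hy; rewrite le_max hx.
rewrite /WEP; apply: bigmax_le; first by rewrite mulr_ge0.
move=> e _; apply: le_trans (hb e) _; apply: ler_wpM2l => //.
exact: le_bigmax.
Qed.

End Tup.

Theorem theorem3 (R : realType) (m : nat) (E : finType)
    (s : 'I_m -> {set E}) (p : E -> R) (p_ge0 : forall e, 0 <= p e) :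
  (\sum_(e : E) p e = 1 ->
     (opt_SUM s p <= optM_SUM s p)%E /\ (optM_SUM s p <= 2%:E * opt_SUM s p)%E) /\
  (\big[Num.max/0]_(e : E) p e = 1 ->
     (opt_MAX s p <= optM_MAX s p)%E /\ (optM_MAX s p <= 2%:E * opt_MAX s p)%E).
Proof.
split=> _; split.
- by apply: ereal_inf_le_tmp => _ [K [hK _] <-]; exists K.
- apply: inf2; first by move=> _ [K _ <-]; exists (EEP s p K).
  move=> _ [K hK <-].
  have [K' [hK' [h1 _]]] := improve p_ge0 hK.
  apply: le_trans (_ : (EEP s p K')%:E <= _)%E.
    by apply: ereal_inf_lbound; exists K'.
  by rewrite -EFinM lee_fin.
- by apply: ereal_inf_le_tmp => _ [K [hK _] <-]; exists K.
- apply: inf2; first by move=> _ [K _ <-]; exists (WEP s p K).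
  move=> _ [K hK <-].
  have [K' [hK' [_ h1]]] := improve p_ge0 hK.
  apply: le_trans (_ : (WEP s p K')%:E <= _)%E.
    by apply: ereal_inf_lbound; exists K'.
  by rewrite -EFinM lee_fin.
Qed.
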